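(* Let $E$ be a finite dimensional Banach space and let $(C_n)_{n=1}^{\infty}$ be a nested sequence ($C_{n+1}\subseteq C_n$) of closed convex subsets of $E$ such that $\bigcap_{n=1}^{\infty}C_n=\{p\}$ for some point $p\in E$. Then $diam(C_n)\to 0$ as $n\to\infty$.
   Context: Diameters are taken with respect to the norm of $E$ (and may be infinite). *)

(* Defs.v *)
From HB Require Import structures.
From mathcomp Require Import all_boot all_order all_algebra.
From mathcomp Require Import all_classical all_reals all_analysis.
Set Implicit Arguments. Unset Strict Implicit. Unset Printing Implicit Defensive.
Import Order.TTheory GRing.Theory Num.Theory.
Import numFieldNormedType.Exports.
Local Open Scope classical_set_scope.
Local Open Scope ring_scope.

Definition finite_dimensional (R : realType) (E : normedModType R) : Prop :=
  exists s : seq E, forall x : E,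
    exists c : 'I_(size s) -> R, x = \sum_(i < size s) c i *: s`_i.

Definition diam (R : realType) (E : normedModType R) (A : set E) : \bar R :=
  ereal_sup [set (`|x - y|)%:E | x in A & y in A].

(* Main.v *)
Require Import Defs.
From HB Require Import structures.
From mathcomp Require Import all_boot all_order all_algebra.
From mathcomp Require Import all_classical all_reals all_analysis.
From mathcomp Require Import lra.
Set Implicit Arguments. Unset Strict Implicit. Unset Printing Implicit Defensive.
Import Order.TTheory GRing.Theory Num.Theory.
Import numFieldNormedType.Exports.
Local Open Scope classical_set_scope.
Local Open Scope ring_scope.

Section S.
Variables (R : realType) (E : normedModType R).

Definition Tb k (b : 'I_k -> E) (c : 'rV[R]_k) : E := \sum_i c ord0 i *: b i.
Definition freeb k (b : 'I_k -> E) := forall c, Tb b c = 0 -> c = 0.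

Lemma Tb0 k (b : 'I_k -> E) : Tb b 0 = 0.
Proof. by rewrite /Tb big1 // => i _; rewrite mxE scale0r. Qed.

Lemma TbD k (b : 'I_k -> E) u v : Tb b (u + v) = Tb b u + Tb b v.
Proof. by rewrite /Tb -big_split; apply: eq_bigr => i _; rewrite mxE scalerDl. Qed.

Lemma TbZ k (b : 'I_k -> E) a u : Tb b (a *: u) = a *: Tb b u.
Proof. by rewrite /Tb scaler_sumr; apply: eq_bigr => i _; rewrite mxE scalerA. Qed.

Lemma TbB k (b : 'I_k -> E) u v : Tb b (u - v) = Tb b u - Tb b v.
Proof. by rewrite TbD -scaleN1r TbZ scaleN1r. Qed.

Definition bext k (x : E) (b : 'I_k -> E) : 'I_k.+1 -> E :=
  fun i => if unlift ord0 i is Some j then b j else x.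

Lemma Tb_ext k x (b : 'I_k -> E) c :
  Tb (bext x b) c = c ord0 ord0 *: x + Tb b (\row_j c ord0 (lift ord0 j)).
Proof.
rewrite /Tb big_ord_recl /bext unlift_none; congr (_ + _).
by apply: eq_bigr => i _; rewrite liftK mxE.
Qed.

Lemma basis_ex (s : seq E) : exists k (b : 'I_k -> E), freeb b /\
  forall y, y \in s -> exists d, y = Tb b d.
Proof.
elim: s => [|x s [k [b [fb sb]]]].
  exists 0, (fun i => 0); split => //.
  by move=> c _; apply/rowP => -[].
have [[d xd]|nx] := pselect (exists d, x = Tb b d).
  exists k, b; split => // y; rewrite in_cons => /orP[/eqP ->|]; last exact: sb.
  by exists d.
exists k.+1, (bext x b); split.
  move=> c; rewrite Tb_ext => H.
  have c0 : c ord0 ord0 = 0.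
    apply: contra_notP nx => /eqP cn0.
    exists (- (c ord0 ord0)^-1 *: \row_j c ord0 (lift ord0 j)).
    rewrite TbZ; apply: (@scalerI _ _ (c ord0 ord0)) => //.
    rewrite scalerA mulrN mulfV // scaleN1r.
    by apply/eqP; rewrite -addr_eq0 H.
  move: H; rewrite c0 scale0r add0r => /fb /rowP H.
  apply/rowP => i; rewrite mxE; case: (unliftP ord0 i) => [j ->|->] //.
  by have := H j; rewrite !mxE.
move=> y; rewrite in_cons => /orP[/eqP ->|/sb [d ->]].
  exists (\row_i (i == ord0)%:R); rewrite Tb_ext mxE eqxx scale1r.
  rewrite [X in _ + Tb _ X](_ : _ = 0) ?Tb0 ?addr0 //.
  by apply/rowP => j; rewrite !mxE.
exists (\row_i (if unlift ord0 i is Some j then d ord0 j else 0)).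
rewrite Tb_ext mxE unlift_none scale0r add0r; congr Tb.
by apply/rowP => j; rewrite !mxE liftK.
Qed.


Lemma Tb_cont k (b : 'I_k -> E) : continuous (Tb b).
Proof.
have -> : Tb b = \sum_i (fun c : 'rV[R]_k => c ord0 i *: b i).
  by rewrite fct_sumE; apply/funext => c.
apply: (big_ind (fun f : 'rV[R]_k -> E => continuous f)).
- by move=> x; exact: cst_continuous.
- by move=> f g cf cg x; exact: (continuousD (cf x) (cg x)).
- move=> i _ x; apply: continuousZr_tmp; exact: coord_continuous.
Qed.

Lemma Tb_lower k (b : 'I_k -> E) : freeb b ->
  exists2 m, 0 < m & forall c, m * `|c| <= `|Tb b c|.
Proof.
move=> fb.
pose S := [set c : 'rV[R]_k | `|c| = 1].
have [[c1 Sc1]|S0] := pselect (S !=set0); last first.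
  exists 1 => // c; suff -> : c = 0 by rewrite normr0 mulr0.
  apply: contra_notP S0 => /eqP c0; exists (`|c|^-1 *: c).
  by rewrite /S /= normrZ normfV normr_id mulVf // normr_eq0.
have cS : compact S.
  apply: bounded_closed_compact.
    rewrite /= /bounded_near; exists 1; split => // M M1 x Sx /=; rewrite Sx; exact: ltW.
  have -> : S = (@Num.norm _ _) @^-1` [set x | x = 1] by [].
  by apply: (proj1 (continuous_closedP _)); [exact: norm_continuous|exact: closed_eq].
have cf : {within S, continuous (fun c => `|Tb b c|)}.
  apply: continuous_subspaceT => x.
  apply: continuous_comp; [exact: Tb_cont | exact: norm_continuous].
have [c0 /set_mem Sc0 minc0] := compact_EVT_min (ex_intro _ c1 Sc1) cS cf.
exists `|Tb b c0|.
  rewrite normr_gt0; apply/eqP => /fb c00.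
  by move: Sc0; rewrite /S /= c00 normr0 => /eqP; rewrite eq_sym oner_eq0.
move=> c; have [->|cn0] := eqVneq c 0; first by rewrite normr0 mulr0.
have nc : 0 < `|c| by rewrite normr_gt0.
have Sc : S (`|c|^-1 *: c).
  by rewrite /S /= normrZ normfV normr_id mulVf // gt_eqF.
have := minc0 _ (mem_set Sc); rewrite TbZ normrZ normfV normr_id => h.
by rewrite -(ler_pM2r nc) mulrAC mulVf ?mul1r ?gt_eqF // in h.
Qed.


Lemma sphere_compact k (b : 'I_k -> E) (p : E) (d : R) :
  freeb b -> (forall x, exists c, x = Tb b c) ->
  compact [set x : E | `|x - p| = d].
Proof.
move=> fb sp; have [m m0 hm] := Tb_lower fb.
pose M := (`|p| + `|d|) / m.
pose A := [set c : 'rV[R]_k | `|c| <= M] `&` [set c | `|Tb b c - p| = d].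
have -> : [set x : E | `|x - p| = d] = Tb b @` A.
  apply/seteqP; split => [x /= xd|_ [c [_ cd] <-] //].
  have [c xc] := sp x; exists c; last by rewrite xc.
  split; last by rewrite /= -xc.
  rewrite /= /M ler_pdivlMr // mulrC (le_trans (hm c)) // -xc.
  have -> : x = p + (x - p) by rewrite addrC subrK.
  by rewrite (le_trans (ler_normD _ _)) // lerD2l xd ler_norm.
apply: continuous_compact.
  by apply: continuous_subspaceT => x; exact: Tb_cont.
apply: bounded_closed_compact.
  rewrite /= /bounded_near; exists M; split; first exact: num_real.
  by move=> N MN c [cM _] /=; rewrite (le_trans cM) // ltW.
apply: closedI.
  have -> : [set c : 'rV[R]_k | `|c| <= M] = (@Num.norm _ _) @^-1` [set x | x <= M] by [].
  by apply: (proj1 (continuous_closedP _)); [exact: norm_continuous|exact: closed_le].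
have -> : [set c | `|Tb b c - p| = d] =
   (fun c => `|Tb b c - p|) @^-1` [set x | x = d] by [].
apply: (proj1 (continuous_closedP _)); last exact: closed_eq.
move=> x; have cB : {for x, continuous (fun c => Tb b c - p)}.
  apply: continuousB; [exact: Tb_cont | exact: cst_continuous].
exact: (continuous_comp cB (@norm_continuous _ _ _)).
Qed.

End S.
Lemma conv_step (R : realType) (E : normedModType R) (A : set E) (x y : E) (t : R) :
  @convex_set R E A -> A x -> A y -> 0 <= t -> t <= 1 -> A (y + t *: (x - y)).
Proof.
move=> cA Ax Ay t0 t1.
have := cA x y (Itv01 t0 t1) (mem_set Ax) (mem_set Ay).
rewrite inE.
have -> : y + t *: (x - y) = t *: x + (1 - t) *: y.
  by rewrite scalerBr scalerBl scale1r addrCA.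
by [].
Qed.

Lemma ebar_zero (R : realType) (v : \bar R) : (0 <= v)%E ->
  (forall e : R, 0 < e -> (v <= e%:E)%E) -> v = 0%E.
Proof.
case: v => [r| |] // r0 ve; last by have := ve 1 ltr01.
rewrite lee_fin in r0; congr EFin.
have [//|rp] := eqVneq r 0.
have r0' : 0 < r by rewrite lt_neqAle eq_sym rp.
have := ve (r / 2); rewrite lee_fin => h.
have : r <= r / 2 by apply: h; lra.
lra.
Qed.

Theorem proposition3p1 (R : realType) (E : completeNormedModType R)
  (C : nat -> set E) (p : E) :
  finite_dimensional E ->
  (forall n, closed (C n)) ->
  (forall n, @convex_set R E (C n)) ->
  (forall n, C n.+1 `<=` C n) ->
  \bigcap_n C n = [set p] ->
  diam (C n) @[n --> \oo] --> (0 : \bar R)%E.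
Proof.
move=> [s hs] Ccl Ccv Cnest Cp.
have [k [b [fb sb]]] := basis_ex s.
have sp : forall x : E, exists c, x = Tb b c.
  move=> x; have [c ->] := hs x.
  apply: (big_ind (fun y : E => exists d, y = Tb b d)).
  - by exists 0; rewrite Tb0.
  - by move=> _ _ [d1 ->] [d2 ->]; exists (d1 + d2); rewrite TbD.
  - move=> i _; have [d ->] := sb _ (mem_nth 0 (ltn_ord i)).
    by exists (c i *: d); rewrite TbZ.
have Cle : forall m n, (m <= n)%N -> C n `<=` C m.
  move=> m n /subnK <-; elim: (n - m)%N => // j IH.
  by rewrite addSn; apply: subset_trans (Cnest _) IH.
have pC : forall n, C n p.
  move=> n; have : (\bigcap_n C n) p by rewrite Cp.
  by move=> /(_ n I).
have key : forall e, 0 < e -> exists N, forall w, C N w -> `|w - p| <= e.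
  move=> e e0; apply: contrapT => nN.
  have : forall N, exists w, C N w /\ e < `|w - p|.
    move=> N; apply: contrapT => hN; apply: nN; exists N => w Cw.
    rewrite leNgt; apply/negP => lt; apply: hN; by exists w.
  move=> /choice [z hz].
  pose y N := p + (e / `|z N - p|) *: (z N - p).
  have zp N : 0 < `|z N - p| := lt_trans e0 (hz N).2.
  have yC N : C N (y N).
    apply: conv_step => //; first exact: (hz N).1.
      by apply: divr_ge0; apply: ltW.
    by rewrite ler_pdivrMr // mul1r ltW // (hz N).2.
  have yS N : `|y N - p| = e.
    rewrite /y [p + _]addrC addrK normrZ ger0_norm ?divfK ?gt_eqF //.
    by apply: divr_ge0; apply: ltW.
  have cK := sphere_compact (p:=p) (d:=e) fb sp.
  have [z0 [/= z0e clz0]] : [set x | `|x - p| = e] `&` cluster (y @ \oo) !=set0.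
    by apply: cK; exists 0%N => // n _ /=; exact: yS.
  have z0C : forall m, C m z0.
    move=> m; rewrite ((closure_id (C m)).1 (Ccl m)) => B Bz0.
    apply: clz0 Bz0; exists m => // n /= mn; apply: (Cle m n mn); exact: yC.
  have : (\bigcap_n C n) z0 by move=> n _; exact: z0C.
  rewrite Cp => /= z0p; move: z0e; rewrite z0p subrr normr0 => e0'.
  by move: e0; rewrite -e0' ltxx.
pose u n := diam (C n).
have ni : nonincreasing_seq u.
  move=> m n mn; apply: ereal_sup_le => _ [x Cx [y Cy <-]].
  exists x; first exact: (Cle m n mn).
  by exists y => //; exact: (Cle m n mn).
have u0 : forall n, (0 <= u n)%E.
  move=> n; apply: le_ereal_sup_tmp; exists 0%:E => //.
  by exists p => //; exists p => //; rewrite subrr normr0.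
have ue : forall e, 0 < e -> exists N, (u N <= e%:E)%E.
  move=> e e0; have [N hN] := key (e / 2) ltac:(by rewrite divr_gt0).
  exists N; apply: ge_ereal_sup => _ [x Cx [y Cy <-]]; rewrite lee_fin.
  have -> : x - y = (x - p) - (y - p) by rewrite opprB addrA subrK.
  rewrite (le_trans (ler_normB _ _)) // [leRHS]splitr.
  by apply: lerD; apply: hN.
have := ereal_nonincreasing_cvgn ni.
suff -> : ereal_inf (u @` setT) = 0%E by [].
apply: ebar_zero.
  by apply: le_ereal_inf_tmp => _ [n _ <-]; exact: u0.
move=> e e0; have [N hN] := ue e e0; apply: le_trans hN.
by apply: ereal_inf_lbound; exists N.
Qed.
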